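(* $M_2(3)=4$, $M_3(3)=8$, and for every integer $k\ge 4$, $$\tfrac{3}{4}\,2^k+2\le M_k(3)\le 2^k-1.$$
   Context: All graphs are finite and simple. A path $v_1,\ldots,v_r$ in a graph $G$ is degree-monotone if $\deg_G(v_1)\le\cdots\le\deg_G(v_r)$; its order is $r$. Let $mp(G)$ be the maximum order of a degree-monotone path in $G$. For a $k$-edge-coloring of $K_n$ with colors $1,\ldots,k$, let $G_j$ be the spanning subgraph consisting of the edges colored $j$ (degrees taken in $G_j$). $M_k(m)$ is the minimum integer $M$ such that for every $n\ge M$ and every $k$-edge-coloring of $K_n$ there is some $j$ with $mp(G_j)\ge m$. *)

(* Defs.v *)
From mathcomp Require Import all_boot.
Set Implicit Arguments. Unset Strict Implicit. Unset Printing Implicit Defensive.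

(* A simple graph on a finite vertex type T is a relation e : rel T
   (used here only for symmetric irreflexive relations). *)
Section Graphs.
Variables (T : finType) (e : rel T).

Definition deg (x : T) : nat := #|[set y | e x y]|.

Definition dm_path (s : seq T) : bool :=
  [&& uniq s, sorted e s & sorted (fun x y => deg x <= deg y) s].

Definition mp : nat :=
  \max_(r < #|T|.+1 | [exists t : r.-tuple T, dm_path t]) r.
End Graphs.

(* A k-edge-colouring of K_n: a symmetric map c on pairs of vertices
   (diagonal values irrelevant).  G_j = spanning subgraph of colour-j edges. *)
Definition colG n k (c : 'I_n -> 'I_n -> 'I_k) (j : 'I_k) : rel 'I_n :=
  fun x y => (x != y) && (c x y == j).

Definition Mk_good (k m M : nat) : Prop :=
  forall n, M <= n ->
  forall c : 'I_n -> 'I_n -> 'I_k, (forall x y, c x y = c y x) ->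
  exists j : 'I_k, m <= mp (colG c j).

Definition is_Mk (k m M : nat) : Prop :=
  Mk_good k m M /\ forall M', Mk_good k m M' -> M <= M'.

(* Main.v *)
Require Import Defs.
From mathcomp Require Import all_boot.
From mathcomp Require Import zify.
From Stdlib Require Import Classical.
Set Implicit Arguments. Unset Strict Implicit. Unset Printing Implicit Defensive.

Section G.
Variables (T : finType) (e : rel T).

Lemma mp_ge3 x y w : x != y -> y != w -> x != w -> e x y -> e y w ->
  deg e x <= deg e y <= deg e w -> 3 <= mp e.
Proof.
move=> nxy nyw nxw exy eyw hd.
have hu : uniq [:: x; y; w] by rewrite /= !inE negb_or nxy nxw nyw.
have h3 : 3 < #|T|.+1.
  rewrite ltnS; have := max_card (mem [:: x; y; w]).
  by rewrite (card_uniqP hu).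
rewrite /mp.
apply: (leq_trans _ (@leq_bigmax_cond _ _ (fun r : 'I_#|T|.+1 => nat_of_ord r) (Ordinal h3) _)) => //.
apply/existsP; exists [tuple x; y; w].
rewrite /dm_path /=. rewrite /= !inE negb_or nxy nxw nyw /= exy eyw /=. by rewrite andbT.
Qed.

Lemma mp_le_card : mp e <= #|T|.
Proof. by apply/bigmax_leqP => r _; rewrite -ltnS. Qed.

Lemma mp_lt3 : (forall x y w, e x y -> e y w -> x != w -> ~~ (deg e x <= deg e y <= deg e w)) ->
  mp e < 3.
Proof.
move=> H; rewrite ltnS; apply/bigmax_leqP => r /existsP [t].
rewrite /dm_path => /and3P [hu hs hd].
case: t hu hs hd => s /= /eqP Hs.
rewrite -Hs.
case: s {Hs} => [|x [|y [|w s]]] //= hu.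
move=> /and3P [exy eyw _] /and3P [dxy dyw _].
exfalso; move: (H x y w exy eyw).
rewrite dxy dyw /=.
move: hu; rewrite !inE !negb_or => /and3P [/andP [_ /andP [nxw _]] _ _].
by move=> /(_ nxw).
Qed.
End G.


Section Alg.
Variables (k : nat) (T : 'I_k -> 'I_k -> bool) (J : {set 'I_k}) (h : 'I_k -> nat)
  (N : nat) (g : 'I_k -> 'I_k).
Hypothesis hk : 4 <= k.
Hypothesis Tirr : forall i, ~~ T i i.
Hypothesis Ttot : forall i j, i != j -> T i j || T j i.
Hypothesis Tasym : forall i j, T i j -> ~~ T j i.
Hypothesis HE : forall i, N = h i + \sum_(l | l != i) (if T i l then h l + 1 else 1).
Hypothesis HU : N = \sum_l (if l \in J then h l else 1).
Hypothesis HX : forall j i, (i \in J) && T j i = (i == g j).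

Lemma HE' i : N = h i + k.-1 + \sum_(l | T i l) h l.
Proof.
rewrite (HE i) -addnA; congr (_ + _).
rewrite (eq_bigr (fun l => 1 + (if T i l then h l else 0))); last first.
  by move=> l _; case: (T i l); rewrite ?addn1 ?addn0.
rewrite big_split /= sum_nat_const.
have -> : #|[pred l | l != i]| = k.-1 by rewrite cardC1 card_ord.
rewrite muln1; congr (_ + _).
rewrite [RHS]big_mkcond /= [LHS]big_mkcond /=; apply: eq_bigr => l _.
case: (eqVneq l i) => [->|]; first by rewrite (negbTE (Tirr i)).
by [].
Qed.

Lemma gJ j : g j \in J.
Proof. by have := HX j (g j); rewrite eqxx => /andP []. Qed.
Lemma gT j : T j (g j).
Proof. by have := HX j (g j); rewrite eqxx => /andP []. Qed.
Lemma gU j i : i \in J -> T j i -> i = g j.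
Proof. by move=> iJ tji; apply/eqP; rewrite -HX iJ tji. Qed.

Lemma Tne i j : T i j -> i != j.
Proof. by move=> t; apply/eqP => e; rewrite e in t; move: (Tirr j); rewrite t. Qed.

Lemma sum_sub (P1 P2 : pred 'I_k) (F : 'I_k -> nat) : (forall l, P1 l -> P2 l) ->
  \sum_(l | P1 l) F l <= \sum_(l | P2 l) F l.
Proof.
move=> H; rewrite [X in X <= _]big_mkcond [X in _ <= X]big_mkcond; apply: leq_sum => l _.
by case P1l: (P1 l); [rewrite (H _ P1l)|].
Qed.

Lemma split_J i : \sum_(l | T i l) h l = h (g i) + \sum_(l | (l \notin J) && T i l) h l.
Proof.
rewrite (bigID (fun l => l \in J)) /=; congr (_ + _).
rewrite (bigD1 (g i)) /=; last by rewrite gT gJ.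
rewrite big1 ?addn0 // => l /andP [/andP [tl lJ] ne].
by move: ne; rewrite (gU lJ tl) eqxx.
by apply: eq_bigl => l; rewrite andbC.
Qed.

Lemma in3 (d a b c : 'I_k) : d \in [set a; b; c] -> [\/ d = a, d = b | d = c].
Proof. rewrite !inE; case: eqP => [->|_]; first by constructor. case: eqP => [->|_]; first by constructor.
by case: eqP => [->|_] //; constructor. Qed.

Lemma contra_alg : False.
Proof.
have k0 : 0 < k by lia.
set j0 := Ordinal k0.
set a := g j0. set b := g a. set c := g b.
have aJ : a \in J := gJ j0. have bJ : b \in J := gJ a. have cJ : c \in J := gJ b.
have tab : T a b := gT a. have tbc : T b c := gT b.
have nab : a != b := Tne tab. have nbc : b != c := Tne tbc.
have nac : a != c.
  apply/eqP => eac; move: (Tasym tab); by rewrite eac tbc.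
have tca : T c a.
  case/orP: (Ttot nac) => // tac.
  by move: nbc; rewrite (gU cJ tac) eqxx.
have gc : g c = a by rewrite (gU aJ tca).
have Jeq : J = [set a; b; c].
  apply/setP => d; apply/idP/idP; last first.
    by move=> H; case: (in3 H) => ->.
  move=> dJ; rewrite !inE; case: eqP => [_|/eqP nda] //; case: eqP => [_|/eqP ndb] //; case: eqP => [_|/eqP ndc] //=; exfalso.
  have tda : T d a.
    case/orP: (Ttot nda) => // tad; by move: ndb; rewrite (gU dJ tad) eqxx.
  have tdb : T d b.
    case/orP: (Ttot ndb) => // tbd; by move: ndc; rewrite (gU dJ tbd) eqxx.
  by move: nab; rewrite (gU aJ tda) (gU bJ tdb) eqxx.
set P := \sum_(l | l \notin J) h l.
set Q := fun x => \sum_(l | (l \notin J) && T x l) h l.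
have EQ x : x \in J -> N = h x + k.-1 + h (g x) + Q x.
  by move=> xJ; rewrite (HE' x) split_J addnA.
have card3 : #|J| = 3.
  rewrite Jeq setUC cardsU1 cards2 !inE nab negb_or ![c == _]eq_sym nac nbc.
  done.
have hU : N = h a + h b + h c + (k - 3).
  rewrite HU (bigID (fun l => l \in J)) /=.
  have e1 : \sum_(i in J) (if i \in J then h i else 1) = \sum_(i in J) h i.
    by apply: eq_bigr => l ->.
  have e2 : \sum_(i < k | i \notin J) (if i \in J then h i else 1) = \sum_(i < k | i \notin J) 1.
    by apply: eq_bigr => l /negbTE ->.
  rewrite e1 e2.
  rewrite sum_nat_const muln1.
  have -> : #|[pred l | l \notin J]| = k - 3.
    have hc := cardC J; rewrite card_ord card3 in hc.
    have hc' : #|[predC J]| = k - 3 by lia.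
    by rewrite -hc'; apply: eq_card => l; rewrite !inE.
  congr (_ + _).
  rewrite (eq_bigl (mem [set a; b; c])); last by move=> l; rewrite Jeq.
  rewrite setUC big_setU1 /=; last by rewrite !inE negb_or ![c == _]eq_sym nac nbc.
  rewrite big_setU1 /= ?big_set1; last by rewrite !inE.
  lia.
have EQa := EQ a aJ. have EQb := EQ b bJ. have EQc := EQ c cJ.
rewrite -/b in EQa. rewrite -/c in EQb. rewrite gc in EQc.
have Qe x : Q x = \sum_(l | l \notin J) (T x l) * h l.
  rewrite /Q big_mkcond [RHS]big_mkcond; apply: eq_bigr => l _.
  by case: (l \notin J); case: (T x l); rewrite ?mul1n ?mul0n.
have Tx l x : l \notin J -> x \in J -> T x l = (x != g l).
  move=> lJ xJ; have nlx : l != x by apply/eqP => e; rewrite e xJ in lJ.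
  rewrite -HX xJ /=.
  by case/orP: (Ttot nlx) => t; rewrite t ?(negbTE (Tasym t)).
have Pab : Q a + Q b + Q c = 2 * P.
  rewrite !Qe -!big_split /= /P big_distrr /=; apply: eq_bigr => l lJ.
  rewrite -!mulnDl; congr (_ * _).
  rewrite (Tx l a lJ aJ) (Tx l b lJ bJ) (Tx l c lJ cJ).
  have : g l \in [set a; b; c] by rewrite -Jeq gJ.
  move=> H; case: (in3 H) => ->.
  - by rewrite eqxx ?(eq_sym b a) ?(eq_sym c a) nab nac.
  - by rewrite eqxx ?(eq_sym c b) nab nbc.
  - by rewrite eqxx nac nbc.
have [r0 r0J] : exists r0, r0 \notin J.
  have hc := cardC J; rewrite card_ord card3 in hc.
  have : 0 < #|[predC J]| by lia.
  by case/card_gt0P => r0; rewrite inE => r0J; exists r0.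
have Er := HE' r0.
have Qr : h r0 + \sum_(l | T r0 l) h l <= P + h (g r0).
  rewrite split_J.
  have : h r0 + Q r0 <= P.
    rewrite /P (bigD1 r0) //= leq_add2l; apply: sum_sub => l /andP [lJ t].
    by rewrite lJ eq_sym (Tne t).
  rewrite /Q; lia.
have QaP : Q a <= P by apply: sum_sub => l /andP [].
have QbP : Q b <= P by apply: sum_sub => l /andP [].
have QcP : Q c <= P by apply: sum_sub => l /andP [].
have : g r0 \in [set a; b; c] by rewrite -Jeq gJ.
by move=> H; case: (in3 H) => e; rewrite e in Qr; lia.
Qed.
End Alg.


Lemma pow2_big k : 2 <= k -> k.+2 <= 2 ^ k.
Proof.
elim: k => // k IH; rewrite leq_eqVlt => /orP [/eqP <- //|hk].
rewrite expnS; have := IH hk; lia.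
Qed.

Section Col.
Variables (n k : nat) (c : 'I_n -> 'I_n -> 'I_k).
Hypothesis csym : forall x y, c x y = c y x.

Definition dg (j : 'I_k) (x : 'I_n) := deg (colG c j) x.

Lemma E_sym j x y : colG c j x y = colG c j y x.
Proof. by rewrite /colG eq_sym csym. Qed.

Lemma E_neq j x y : colG c j x y -> x != y.
Proof. by case/andP. Qed.

Lemma dgE j x : dg j x = \sum_(y | colG c j x y) 1.
Proof. by rewrite /dg /deg sum1_card cardsE. Qed.

Lemma deg_sum x : \sum_(j < k) dg j x = n.-1.
Proof.
rewrite (eq_bigr (fun j => \sum_y (if colG c j x y then 1 else 0))); last first.
  by move=> j _; rewrite dgE big_mkcond.
rewrite exchange_big /=.
rewrite (eq_bigr (fun y => (x != y : nat))); last first.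
  move=> y _; rewrite /colG.
  case: (x != y) => /=; last by rewrite big1.
  rewrite (bigD1 (c x y)) //= eqxx big1 ?addn0 // => j /negbTE.
  by rewrite eq_sym => ->.
rewrite -[n in n.-1](card_ord n) -(cardC1 x) -sum1_card.
rewrite [RHS]big_mkcond /=; apply: eq_bigr => y _; rewrite !inE eq_sym; by case: (y != x).
Qed.

Hypothesis hbad : forall j, mp (colG c j) < 3.

Lemma nomono j x y w : colG c j x y -> colG c j y w -> x != w ->
  ~~ ((dg j x <= dg j y) && (dg j y <= dg j w)).
Proof.
move=> exy eyw nxw; apply/negP => hd.
have := hbad j; rewrite ltnNge (mp_ge3 (E_neq exy) (E_neq eyw) nxw exy eyw hd) //.
Qed.

Definition ltl j (y x : 'I_n) := (dg j y < dg j x) || ((dg j y == dg j x) && (y < x)).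
Definition sg j x := [exists y, colG c j x y && ltl j y x].

Lemma ltl_total j x y : x != y -> ltl j x y || ltl j y x.
Proof.
move=> nxy; rewrite /ltl.
case: (ltngtP (dg j x) (dg j y)) => //= _.
case: (ltngtP x y) => // /val_inj exy.
by rewrite exy eqxx in nxy.
Qed.

Lemma ltl_asym j x y : ltl j x y -> ~~ ltl j y x.
Proof.
rewrite /ltl; case: (ltngtP (dg j x) (dg j y)) => //= _.
by move=> h; rewrite ltnNge ltnW.
Qed.

Lemma ltl_le j x y : ltl j x y -> dg j x <= dg j y.
Proof. by rewrite /ltl => /orP [/ltnW|/andP [/eqP -> _]]. Qed.

Lemma edge_sides j x y : colG c j x y -> sg j x != sg j y.
Proof.
wlog: x y / ltl j y x.
  move=> W exy; case/orP: (ltl_total j (E_neq exy)) => h.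
    by rewrite eq_sym; apply: W => //; rewrite E_sym.
  by apply: W.
move=> hyx exy.
have -> : sg j x by apply/existsP; exists y; rewrite exy hyx.
apply/negP => /existsP [w /andP [eyw hwy]].
case: (eqVneq w x) => [ewx|nwx].
  by rewrite ewx in hwy; move: (ltl_asym hyx); rewrite hwy.
have ewy : colG c j w y by rewrite E_sym.
have eyx : colG c j y x by rewrite E_sym.
by move: (nomono ewy eyx nwx); rewrite (ltl_le hwy) (ltl_le hyx).
Qed.

Lemma sg_deg j x : sg j x -> 0 < dg j x.
Proof.
case/existsP => y /andP [exy _]; rewrite dgE (bigD1 y) //.
Qed.

Lemma nbr_deg j y : (exists x, colG c j y x) -> 0 < dg j y.
Proof. by case=> x exy; rewrite dgE (bigD1 x). Qed.

Lemma deg2_other j b a : colG c j b a -> 2 <= dg j b -> exists w, colG c j b w && (w != a).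
Proof.
move=> eba; rewrite /dg /deg (cardsD1 a) inE eba add1n ltnS card_gt0.
case/set0Pn => w; rewrite !inE => /andP [nwa ebw].
by exists w; rewrite ebw nwa.
Qed.

Lemma edge_deg j a b : colG c j a b -> ~~ sg j a ->
  (dg j a < dg j b) || ((dg j a == 1) && (dg j b == 1)).
Proof.
move=> eab nsa.
have hab : ltl j a b.
  case/orP: (ltl_total j (E_neq eab)) => // hba.
  by move: nsa; have -> : sg j a by apply/existsP; exists b; rewrite eab hba.
have := ltl_le hab; rewrite leq_eqVlt => /orP [/eqP he|->] //.
rewrite he ltnn andbb /=.
have hb : 0 < dg j b by apply: nbr_deg; exists a; rewrite E_sym.
rewrite leq_eqVlt in hb; case/orP: hb => [/eqP <- //|hb].
have eba : colG c j b a by rewrite E_sym.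
have [w /andP [ebw nwa]] := deg2_other eba hb.
exfalso.
case: (leqP (dg j b) (dg j w)) => hw.
  have naw : a != w by rewrite eq_sym.
  by have := nomono eab ebw naw; rewrite he leqnn hw.
have ewb : colG c j w b by rewrite E_sym.
by have := nomono ewb eba nwa; rewrite (ltnW hw) he leqnn.
Qed.

Definition vec := {ffun 'I_k -> bool}.
Definition sv x : vec := [ffun j => sg j x].
Lemma svE x j : sv x j = sg j x.
Proof. by rewrite ffunE. Qed.

Lemma sv_inj : injective sv.
Proof.
move=> x y h; apply/eqP; apply/negPn/negP => nxy.
have exy : colG c (c x y) x y by rewrite /colG nxy eqxx.
by have := edge_sides exy; rewrite -!svE h eqxx.
Qed.

Lemma forced x y j : x != y -> (forall i, i != j -> sv x i = sv y i) -> c x y = j.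
Proof.
move=> nxy h; apply/eqP; apply/negPn/negP => ne.
have exy : colG c (c x y) x y by rewrite /colG nxy eqxx.
by have := edge_sides exy; rewrite -!svE h ?eqxx.
Qed.

Lemma n_le : n <= 2 ^ k.
Proof. by have := @leq_card _ _ sv sv_inj; rewrite card_ffun card_bool !card_ord. Qed.

Definition tog (j : 'I_k) (v : vec) : vec := [ffun i => if i == j then ~~ v i else v i].
Lemma togE j v i : tog j v i = if i == j then ~~ v i else v i.
Proof. by rewrite ffunE. Qed.
Lemma togK j : involutive (tog j).
Proof. by move=> v; apply/ffunP => i; rewrite !togE; case: (i == j) => //; rewrite negbK. Qed.
Lemma tog_inj j : injective (tog j).
Proof. exact: (inv_inj (togK j)). Qed.

Definition D j (v : vec) := \sum_x (sv x == v) * dg j x.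
Lemma D_sv j x : D j (sv x) = dg j x.
Proof.
rewrite /D (bigD1 x) //= eqxx mul1n big1 ?addn0 // => y nyx.
by rewrite (inj_eq sv_inj) (negbTE nyx).
Qed.
Lemma D_out j v : (forall x, sv x != v) -> D j v = 0.
Proof. by move=> H; rewrite /D big1 // => x _; rewrite (negbTE (H x)). Qed.

Lemma sumD j (P : pred vec) : \sum_(v | P v) D j v = \sum_(x | P (sv x)) dg j x.
Proof.
rewrite /D exchange_big /= [RHS]big_mkcond /=; apply: eq_bigr => x _.
rewrite big_mkcond /= (bigD1 (sv x)) //= eqxx mul1n big1 ?addn0.
  by case: (P (sv x)).
by move=> v nv; rewrite eq_sym (negbTE nv) if_same.
Qed.

Lemma sum_pair (I J : finType) (P : pred I) (Q : I -> pred J) :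
  \sum_(i | P i) \sum_(j | Q i j) 1 = \sum_i \sum_j (P i && Q i j : nat).
Proof.
rewrite big_mkcond; apply: eq_bigr => i _; case: (P i) => /=; last by rewrite big1.
by rewrite big_mkcond; apply: eq_bigr => j _; case: (Q i j).
Qed.

Lemma bip j : \sum_(x | ~~ sg j x) dg j x = \sum_(x | sg j x) dg j x.
Proof.
transitivity (\sum_(x | ~~ sg j x) \sum_(y | colG c j x y) 1).
  by apply: eq_bigr => x _; rewrite dgE.
transitivity (\sum_(x | sg j x) \sum_(y | colG c j x y) 1); last first.
  by apply: eq_bigr => x _; rewrite dgE.
rewrite !sum_pair exchange_big /=; apply: eq_bigr => y _; apply: eq_bigr => x _.
case exy: (colG c j x y); last by rewrite E_sym exy !andbF.
rewrite E_sym exy !andbT.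
have := edge_sides exy; by case: (sg j x); case: (sg j y).
Qed.

Lemma sum_tog j (F : vec -> nat) : \sum_(v : vec | ~~ v j) F v = \sum_(w : vec | w j) F (tog j w).
Proof.
rewrite (reindex_inj (@tog_inj j)); apply: eq_bigl => w.
by rewrite togE eqxx negbK.
Qed.

Lemma main_id j : \sum_(w : vec | w j) D j (tog j w) = \sum_(w : vec | w j) D j w.
Proof.
rewrite -(sum_tog j (D j)) (sumD j (fun v : vec => ~~ v j)) (sumD j (fun v : vec => v j)).
under eq_bigl do rewrite svE.
under [RHS]eq_bigl do rewrite svE.
exact: bip.
Qed.

Lemma tog_forced j x y : sv y = tog j (sv x) -> x != y /\ c x y = j.
Proof.
move=> h.
have nxy : x != y.
  apply/eqP => exy; move/ffunP: h => /(_ j); rewrite exy togE eqxx.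
  by case: (sv y j).
split=> //; apply: forced => // i nij; by rewrite h togE (negbTE nij).
Qed.

Lemma tog_edge j x y : sv y = tog j (sv x) -> colG c j x y.
Proof. by case/tog_forced => nxy cxy; rewrite /colG nxy cxy eqxx. Qed.

Lemma sum_eq_le (I : finType) (P : pred I) (f g : I -> nat) :
  (forall i, P i -> g i <= f i) -> \sum_(i | P i) f i = \sum_(i | P i) g i ->
  forall i, P i -> f i = g i.
Proof.
move=> le eq i Pi; apply/eqP; rewrite eqn_leq le // andbT.
move: eq; rewrite (bigD1 i) //= [X in _ = X](bigD1 i) //= => eq.
have : \sum_(j | P j && (j != i)) g j <= \sum_(j | P j && (j != i)) f j.
  by apply: leq_sum => j /andP [Pj _]; apply: le.
lia.
Qed.

Lemma part_ineq j a b : sv a = tog j (sv b) -> sv b j ->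
  (dg j a < dg j b) || ((dg j a == 1) && (dg j b == 1)).
Proof.
move=> h hb.
have eba : colG c j b a by apply: tog_edge.
have nsa : ~~ sg j a by rewrite -svE h togE eqxx hb.
by apply: edge_deg => //; rewrite E_sym.
Qed.

Lemma full_contra : 2 ^ k <= n -> 2 <= k -> False.
Proof.
move=> hn hk.
have surj : forall v, exists x, sv x = v.
  move=> v; have := inj_card_onto sv_inj.
  rewrite card_ffun card_bool !card_ord => /(_ hn v) /codomP [x ->].
  by exists x.
have all1 : forall j x, dg j x = 1.
  move=> j.
  have key : forall w : vec, w j -> D j w = D j (tog j w).
    apply: sum_eq_le; last by rewrite main_id.
    move=> w hw; have [b hb] := surj w; have [a ha] := surj (tog j w).
    subst w; rewrite -ha !D_sv.
    by case/orP: (part_ineq ha hw) => [/ltnW|/andP [/eqP h1 /eqP h2]] //; rewrite h1 h2.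
  have key2 : forall a b, sv a = tog j (sv b) -> sv b j -> dg j a = 1 /\ dg j b = 1.
    move=> a b ha hb; have := key _ hb; rewrite -ha !D_sv => he.
    by case/orP: (part_ineq ha hb) => [|/andP [/eqP h1 /eqP h2]] //; rewrite he ltnn.
  move=> x; case hx: (sv x j).
    have [a ha] := surj (tog j (sv x)).
    by case: (key2 a x ha hx).
  have [b hb] := surj (tog j (sv x)).
  have hb' : sv x = tog j (sv b) by rewrite hb togK.
  have hbj : sv b j by rewrite hb togE eqxx hx.
  by case: (key2 x b hb' hbj).
have n0 : 0 < n by apply: leq_trans hn; rewrite expn_gt0.
have := deg_sum (Ordinal n0).
under eq_bigr do rewrite all1.
rewrite sum_nat_const card_ord muln1 => hk1.
have := pow2_big hk; have := n_le; lia.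
Qed.

Lemma sumF (F : 'I_n -> nat) (P : pred vec) :
  \sum_(v | P v) \sum_x (sv x == v) * F x = \sum_(x | P (sv x)) F x.
Proof.
rewrite exchange_big /= [RHS]big_mkcond /=; apply: eq_bigr => x _.
rewrite big_mkcond /= (bigD1 (sv x)) //= eqxx mul1n big1 ?addn0.
  by case: (P (sv x)).
by move=> v nv; rewrite eq_sym (negbTE nv) if_same.
Qed.

Lemma Fsv (F : 'I_n -> nat) y : \sum_x (sv x == sv y) * F x = F y.
Proof.
rewrite (bigD1 y) //= eqxx mul1n big1 ?addn0 // => x nxy.
by rewrite (inj_eq sv_inj) (negbTE nxy).
Qed.

Lemma two_nbrs j b x y : colG c j b x -> colG c j b y -> x != y -> 2 <= dg j b.
Proof.
move=> ex ey nxy.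
have -> : 2 = #|[set x; y]| by rewrite cards2 nxy.
by apply: subset_leq_card; apply/subsetP => z; rewrite !inE => /orP [] /eqP ->.
Qed.

Section Odd.
Hypothesis hn : n.+1 = 2 ^ k.
Hypothesis hk4 : 4 <= k.
Variable x0 : 'I_n.

Definition top : vec := [ffun => true].
Definition zero : vec := [ffun => false].

Definition MS := ~: [set v | v \in codom sv].
Lemma card_miss : #|MS| = 1.
Proof.
have := cardsC [set v | v \in codom sv].
rewrite cardsE (card_codom sv_inj) card_ord card_ffun card_bool card_ord.
rewrite -hn -/MS => h; lia.
Qed.

Lemma miss_in v : (forall x, sv x != v) -> v \in MS.
Proof. by move=> H; rewrite !inE; apply/codomP => [[x hx]]; move: (H x); rewrite hx eqxx. Qed.

Lemma missing_ex : exists v, forall x, sv x != v.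
Proof.
have : 0 < #|MS| by rewrite card_miss.
case/card_gt0P => v; rewrite !inE => hv; exists v => x; apply/eqP => e.
by move: hv; rewrite -e codom_f.
Qed.

Lemma one_missing v w : (forall x, sv x != v) -> (forall x, sv x != w) -> v = w.
Proof.
move=> hv hw; have : #|MS| <= 1 by rewrite card_miss.
by move/card_le1_eqP; apply; apply: miss_in.
Qed.

Lemma present_of v w : (forall x, sv x != v) -> w != v -> exists x, sv x = w.
Proof.
move=> hv nwv; case: (boolP [exists x, sv x == w]) => [/existsP [x /eqP hx]|]; first by exists x.
rewrite negb_exists => /forallP hw.
by move: nwv; rewrite (one_missing hw hv) eqxx.
Qed.

Lemma missing_top v : (forall x, sv x != v) -> v = top.
Proof.
move=> hv; apply/ffunP => j; rewrite ffunE; apply/negPn/negP => nvj.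
set w0 := tog j v.
have w0j : w0 j by rewrite /w0 togE eqxx.
have pres w : w != v -> exists x, sv x = w by apply: present_of.
have le : forall w : vec, w j -> D j (tog j w) <= D j w.
  move=> w wj; case: (eqVneq w w0) => [->|nw].
    by rewrite /w0 togK (D_out j hv).
  have [b hb] : exists b, sv b = w by apply: pres; apply/eqP => e; rewrite e in wj; rewrite wj in nvj.
  have [a ha] : exists a, sv a = tog j w.
    by apply: pres; apply/eqP => e; move: nw; rewrite /w0 -e togK eqxx.
  subst w; rewrite -ha !D_sv.
  by case/orP: (part_ineq ha wj) => [/ltnW|/andP [/eqP h1 /eqP h2]] //; rewrite h1 h2.
have eq := sum_eq_le le (esym (main_id j)) w0j.
have [b hb] : exists b, sv b = w0 by apply: pres; apply/eqP => e; move: (w0j); rewrite e (negbTE nvj).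
move: eq; rewrite /w0 togK (D_out j hv) -/w0 -hb D_sv => h0.
have := sg_deg (j:=j) (x:=b); rewrite -svE hb w0j h0 => /(_ isT).
by [].
Qed.

Lemma top_missing x : sv x != top.
Proof.
have [v hv] := missing_ex; rewrite -(missing_top hv); exact: hv.
Qed.

Lemma present w : w != top -> exists x, sv x = w.
Proof. by apply: present_of; apply: top_missing. Qed.

Definition inv w := odflt x0 [pick x | sv x == w].
Lemma inv_sv w : w != top -> sv (inv w) = w.
Proof.
move=> wt; rewrite /inv; case: pickP => [x /eqP //|H].
by have [x hx] := present wt; move: (H x); rewrite hx eqxx.
Qed.

Lemma tog_ne_top j (v : vec) : v j -> tog j v != top.
Proof. by move=> vj; apply/eqP => /ffunP /(_ j); rewrite togE eqxx ffunE vj. Qed.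

Definition zz j := inv (tog j top).
Lemma sv_zz j : sv (zz j) = tog j top.
Proof. by apply: inv_sv; apply: tog_ne_top; rewrite ffunE. Qed.
Definition hh j := dg j (zz j).
Definition HH j := [set y | colG c j (zz j) y].
Definition pp j x := inv (tog j (sv x)).

Lemma sv_pp j x : x != zz j -> sv (pp j x) = tog j (sv x).
Proof.
move=> nx; apply: inv_sv; apply/eqP => e; move: nx.
by rewrite -(sv_inj (x1:=x) (x2:=zz j)) ?eqxx // sv_zz -e togK.
Qed.

Lemma pp_edge j x : x != zz j -> colG c j x (pp j x).
Proof. by move=> nx; apply: tog_edge; rewrite sv_pp. Qed.

Lemma pp_nzz j x : x != zz j -> pp j x != zz j.
Proof.
move=> nx; apply/eqP => e; have := sv_pp nx; rewrite e sv_zz => /tog_inj h.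
by move: (top_missing x); rewrite -h eqxx.
Qed.

Lemma ppK j x : x != zz j -> pp j (pp j x) = x.
Proof. by move=> nx; apply: sv_inj; rewrite !sv_pp ?togK // pp_nzz. Qed.

Lemma sg_zz j : ~~ sg j (zz j).
Proof. by rewrite -svE sv_zz togE eqxx ffunE. Qed.

Lemma sg_nzz j b : sg j b -> b != zz j.
Proof. by move=> sb; apply/eqP => e; move: (sg_zz j); rewrite -e sb. Qed.

Lemma HH_sg j b : b \in HH j -> sg j b.
Proof.
rewrite inE => e; have := edge_sides e.
by rewrite (negbTE (sg_zz j)); case: (sg j b).
Qed.

Lemma struct_eq j b : sg j b -> dg j b = dg j (pp j b) + (b \in HH j).
Proof.
move=> sb.
set W := fun w : vec => w j && (w != top).
have key := main_id j.
rewrite (bigD1 top) ?ffunE //= [in RHS](bigD1 top) ?ffunE //= in key.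
rewrite (D_out j top_missing) -sv_zz D_sv -/(hh j) add0n in key.
set G := fun w => D j (tog j w) + \sum_x (sv x == w) * (x \in HH j).
have le : forall w, W w -> G w <= D j w.
  move=> w /andP [wj wt]; have [b' hb] := present wt; subst w.
  have bz : b' != zz j by apply: sg_nzz; rewrite -svE.
  rewrite /G Fsv D_sv -(sv_pp bz) D_sv.
  case/orP: (part_ineq (sv_pp bz) wj) => [lt|/andP [/eqP h1 /eqP h2]].
    by case: (b' \in HH j); rewrite /= ?addn1 ?addn0 // ltnW.
  case hb: (b' \in HH j); last by rewrite h1 h2.
  exfalso; have := two_nbrs (x := zz j) (y := pp j b') (b := b') (j := j).
  rewrite h2 E_sym; move: hb; rewrite inE => -> /(_ isT).
  by rewrite pp_edge // eq_sym pp_nzz // => /(_ isT isT).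
have sumeq : \sum_(w | W w) G w = \sum_(w | W w) D j w.
  rewrite big_split /= -key addnC; congr (_ + _).
  rewrite sumF /hh /dg /deg -/(HH j) -sum1_card big_mkcond [RHS]big_mkcond /=.
  apply: eq_bigr => x _.
  case hx: (x \in HH j); last by case: (W (sv x)).
  by rewrite /W svE HH_sg // top_missing.
have := sum_eq_le le (esym sumeq) (i := sv b).
rewrite /W svE sb top_missing /= => /(_ isT).
rewrite /G Fsv D_sv -(sv_pp (sg_nzz sb)) D_sv.
by [].
Qed.

Lemma F1 j b : sg j b -> b \notin HH j -> dg j b = 1.
Proof.
move=> sb nb; have := struct_eq sb; rewrite (negbTE nb) addn0 => he.
have bz := sg_nzz sb.
have sbj : sv b j by rewrite svE.
case/orP: (part_ineq (sv_pp bz) sbj) => [|/andP [_ /eqP //]].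
by rewrite he ltnn.
Qed.

Lemma F1h j b : b \in HH j -> dg j b = (dg j (pp j b)).+1.
Proof. by move=> hb; rewrite (struct_eq (HH_sg hb)) hb addn1. Qed.

Lemma Nsub j b : b \in HH j -> [set y | colG c j b y] \subset zz j |: (pp j @: HH j).
Proof.
move=> hb; apply/subsetP => y; rewrite !inE => eby.
case: (eqVneq y (zz j)) => [->|nyz] //=.
have sy : ~~ sg j y.
  by have := edge_sides eby; rewrite (HH_sg hb); case: (sg j y).
set b' := pp j y.
have sb' : sg j b' by rewrite -svE /b' sv_pp // togE eqxx svE.
have yb' : y = pp j b' by rewrite ppK.
case hb': (b' \in HH j); first by apply/imsetP; exists b'.
exfalso.
have d1 := F1 sb' (negbT hb').
have := struct_eq sb'; rewrite hb' addn0 d1 -yb' => dy.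
have eyb : colG c j y b by rewrite E_sym.
have nbb : b != b' by apply/eqP => e; move: hb'; rewrite -e hb.
by have := two_nbrs eyb (pp_edge nyz) nbb; rewrite -dy.
Qed.

Lemma F1' j b : b \in HH j -> dg j b = (hh j).+1 /\ [set y | colG c j b y] = zz j |: (pp j @: HH j).
Proof.
move=> hb.
have hsub := Nsub hb.
have hcard : #|zz j |: (pp j @: HH j)| <= (hh j).+1.
  rewrite cardsU1; have := leq_imset_card (pp j) (HH j).
  have -> : hh j = #|HH j| by [].
  by case: (zz j \notin _) => /=; lia.
have hge : (hh j).+1 <= dg j b.
  have ezb : colG c j (zz j) b by rewrite inE in hb.
  case/orP: (edge_deg ezb (sg_zz j)) => [//|/andP [_ /eqP d1]].
  exfalso; have := F1h hb; rewrite d1 => -[h0].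
  have bz : b != zz j by apply: sg_nzz; apply: HH_sg.
  have : 0 < dg j (pp j b) by apply: nbr_deg; exists b; rewrite E_sym pp_edge.
  by rewrite -h0.
have hle : dg j b <= #|zz j |: (pp j @: HH j)| by apply: subset_leq_card.
split; first lia.
apply/eqP; rewrite eqEcard hsub /=.
have -> : #|[set y | colG c j b y]| = dg j b by [].
exact: leq_trans hcard hge.
Qed.

Lemma F2 j a : ~~ sg j a -> 2 <= dg j a -> [set y | colG c j a y] = HH j.
Proof.
move=> sa da.
have nb : forall y, colG c j a y -> y \in HH j.
  move=> y eay.
  have sy : sg j y by have := edge_sides eay; rewrite (negbTE sa); case: (sg j y).
  apply/negPn/negP => ny; have d1 := F1 sy ny.
  case/orP: (edge_deg eay sa) => [|/andP [/eqP da1 _]].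
    by rewrite d1; case: (dg j a) da.
  by rewrite da1 in da.
have [y0 ey0] : exists y0, colG c j a y0.
  have : 0 < #|[set y | colG c j a y]| by have -> : #|[set y | colG c j a y]| = dg j a by []; lia.
  by case/card_gt0P => y; rewrite inE => e; exists y.
have aL : a \in zz j |: (pp j @: HH j).
  have [_ L] := F1' (nb y0 ey0).
  by rewrite -L inE E_sym.
apply/setP => y; rewrite inE; apply/idP/idP; first exact: nb.
move=> hy; have [_ L] := F1' hy.
by move: aL; rewrite -L inE E_sym.
Qed.
Lemma other3 (i j : 'I_k) : exists l, (l != i) && (l != j).
Proof.
have h := cardsC [set i; j]; rewrite card_ord in h.
have h2 : #|[set i; j]| <= 2 by rewrite cards2; case: (i != j).
have : 0 < #|~: [set i; j]| by lia.
by case/card_gt0P => l; rewrite !inE negb_or => hl; exists l.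
Qed.

Lemma zero_ne_top : zero != top.
Proof.
have k0 : 0 < k by lia.
by apply/eqP => /ffunP /(_ (Ordinal k0)); rewrite !ffunE.
Qed.

Definition uu := inv zero.
Lemma sv_uu : sv uu = zero.
Proof. exact: inv_sv zero_ne_top. Qed.

Lemma uu_nzz l : uu != zz l.
Proof.
apply/eqP => e; have [l' /andP [h1 _]] := other3 l l.
have := congr1 (fun f : vec => f l') (congr1 sv e).
by rewrite sv_uu sv_zz togE (negbTE h1) !ffunE.
Qed.

Lemma sg_uu l : ~~ sg l uu.
Proof. by rewrite -svE sv_uu ffunE. Qed.

Lemma deg_uu_pos l : 0 < dg l uu.
Proof. by apply: nbr_deg; exists (pp l uu); apply: pp_edge; apply: uu_nzz. Qed.

Definition JJ := [set l | 2 <= dg l uu].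

Lemma deg_uu l : dg l uu = if l \in JJ then hh l else 1.
Proof.
rewrite inE; case: ifP => h.
  by have := F2 (sg_uu l) h; rewrite /dg /deg => ->.
by have := deg_uu_pos l; move: h; case: (dg l uu) => [|[|m]].
Qed.

Definition Tr i j := (i != j) && (c (zz i) (zz j) == j).

Lemma zz_ne i j : i != j -> zz i != zz j.
Proof.
move=> nij; apply/eqP => e; have := congr1 (fun f : vec => f i) (congr1 sv e).
by rewrite !sv_zz !togE eqxx (negbTE nij) !ffunE.
Qed.

Lemma c_zz i j : i != j -> (c (zz i) (zz j) == i) || (c (zz i) (zz j) == j).
Proof.
move=> nij; set l := c (zz i) (zz j).
have e : colG c l (zz i) (zz j) by rewrite /colG zz_ne // eqxx.
have := edge_sides e; rewrite -!svE !sv_zz !togE !ffunE.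
by case: (l == i); case: (l == j).
Qed.

Lemma Tr_irr i : ~~ Tr i i.
Proof. by rewrite /Tr eqxx. Qed.

Lemma Tr_tot i j : i != j -> Tr i j || Tr j i.
Proof.
move=> nij; rewrite /Tr nij (eq_sym j i) nij /= (csym (zz j)).
by case/orP: (c_zz nij) => ->; rewrite ?orbT // orbC.
Qed.

Lemma Tr_asym i j : Tr i j -> ~~ Tr j i.
Proof.
rewrite /Tr => /andP [nij /eqP e]; rewrite csym e.
by rewrite eq_sym (negbTE nij) andbF.
Qed.

Lemma Tr_HH i j : Tr i j = (i != j) && (zz i \in HH j).
Proof.
rewrite /Tr inE /colG; case: (eqVneq i j) => //= nij.
by rewrite (eq_sym (zz j)) zz_ne // (csym (zz j)).
Qed.

Lemma deg_zz_other i l : l != i -> dg l (zz i) = if Tr i l then (hh l).+1 else 1.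
Proof.
move=> nli.
have sz : sg l (zz i) by rewrite -svE sv_zz togE (negbTE nli) ffunE.
rewrite Tr_HH eq_sym nli /=; case: ifP => h.
  by case: (F1' h).
by apply: F1 => //; rewrite h.
Qed.

Lemma HE i : n.-1 = hh i + \sum_(l | l != i) (if Tr i l then hh l + 1 else 1).
Proof.
rewrite -(deg_sum (zz i)) (bigD1 i) //=; congr (_ + _).
by apply: eq_bigr => l nli; rewrite deg_zz_other // addn1.
Qed.

Lemma HU : n.-1 = \sum_l (if l \in JJ then hh l else 1).
Proof. by rewrite -(deg_sum uu); apply: eq_bigr => l _; rewrite deg_uu. Qed.

Definition gg j := c uu (zz j).

Lemma HX j i : (i \in JJ) && Tr j i = (i == gg j).
Proof.
apply/idP/idP.
  case/andP => iJ t.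
  rewrite inE in iJ.
  have NU' := F2 (sg_uu i) iJ.
  move: t; rewrite Tr_HH => /andP [_ hz].
  have : zz j \in [set y | colG c i uu y] by rewrite NU'.
  by rewrite inE /gg => /andP [_ /eqP ->].
move=> /eqP ->; set i' := gg j.
have e : colG c i' uu (zz j) by rewrite /colG uu_nzz eqxx.
have i'J : i' \in JJ.
  apply/negPn/negP => ni.
  have d1 : dg i' uu = 1 by rewrite deg_uu (negbTE ni).
  have h1 : #|[set y | colG c i' uu y]| <= 1 by have -> : #|[set y | colG c i' uu y]| = dg i' uu by []; rewrite d1.
  have : zz j = pp i' uu.
    by move/card_le1_eqP: h1; apply; rewrite inE // pp_edge // uu_nzz.
  move=> /(congr1 sv); rewrite sv_zz sv_pp ?uu_nzz // sv_uu.
  have [l /andP [h1' h2']] := other3 i' j.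
  by move=> /ffunP /(_ l); rewrite !togE (negbTE h1') (negbTE h2') !ffunE.
rewrite i'J /= Tr_HH.
have nji : j != i'.
  apply/eqP => ej; have := edge_sides e; rewrite -ej (negbTE (sg_uu j)).
  by rewrite (negbTE (sg_zz j)).
rewrite nji /=.
move: i'J; rewrite inE => i'J.
have NU := F2 (sg_uu i') i'J.
by rewrite -NU inE.
Qed.

Lemma odd_contra : False.
Proof.
exact: (@contra_alg k Tr JJ hh n.-1 gg hk4 Tr_irr Tr_tot Tr_asym HE HU HX).
Qed.
End Odd.
End Col.


Definition bad k n := exists c : 'I_n -> 'I_n -> 'I_k,
  (forall x y, c x y = c y x) /\ forall j, mp (colG c j) < 3.

Lemma bad_small k n : 0 < k -> n <= 2 -> bad k n.
Proof.
move=> k0 hn; exists (fun _ _ => Ordinal k0); split=> // j.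
by apply: leq_ltn_trans (mp_le_card _) _; rewrite card_ord; lia.
Qed.

Lemma mp_nomono (T : finType) (e : rel T) x y w : mp e < 3 ->
  x != y -> y != w -> x != w -> e x y -> e y w -> ~~ ((deg e x <= deg e y) && (deg e y <= deg e w)).
Proof.
move=> h nxy nyw nxw exy eyw; apply/negP => hd.
by move: h; rewrite ltnNge (mp_ge3 nxy nyw nxw exy eyw hd).
Qed.

Lemma deg_img (T T' : finType) (e : rel T') (v : T') (f : T -> T') (A : {set T}) :
  injective f -> (forall z, e v z = (z \in f @: A)) -> deg e v = #|A|.
Proof.
move=> fi h; rewrite /deg -(card_imset _ fi); apply: eq_card => z.
by rewrite inE h.
Qed.

Section Comb.
Variables (k a b : nat) (c1 : 'I_a -> 'I_a -> 'I_k) (c2 : 'I_b -> 'I_b -> 'I_k).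
Hypotheses (s1 : forall x y, c1 x y = c1 y x) (s2 : forall x y, c2 x y = c2 y x).
Hypotheses (b1 : forall j, mp (colG c1 j) < 3) (b2 : forall j, mp (colG c2 j) < 3).
Hypothesis nab : a != b.

Definition wk (j : 'I_k) : 'I_k.+1 := widen_ord (leqnSn k) j.
Lemma wk_inj : injective wk.
Proof. by move=> i j /(congr1 val) /= /val_inj. Qed.
Lemma wk_max j : (wk j == ord_max) = false.
Proof. by apply/negbTE; rewrite -val_eqE /= neq_ltn ltn_ord. Qed.

Definition cc (x y : 'I_(a + b)) : 'I_k.+1 :=
  match @split a b x, @split a b y with
  | inl x', inl y' => wk (c1 x' y')
  | inr x', inr y' => wk (c2 x' y')
  | _, _ => ord_max
  end.

Lemma spl x' : @split a b (lshift b x') = inl x'. Proof. exact: (unsplitK (inl x')). Qed.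
Lemma spr y' : @split a b (rshift a y') = inr y'. Proof. exact: (unsplitK (inr y')). Qed.

Lemma cc_ll x y : cc (lshift b x) (lshift b y) = wk (c1 x y). Proof. by rewrite /cc !spl. Qed.
Lemma cc_rr x y : cc (rshift a x) (rshift a y) = wk (c2 x y). Proof. by rewrite /cc !spr. Qed.
Lemma cc_lr x y : cc (lshift b x) (rshift a y) = ord_max. Proof. by rewrite /cc spl spr. Qed.
Lemma cc_rl x y : cc (rshift a x) (lshift b y) = ord_max. Proof. by rewrite /cc spl spr. Qed.

Lemma cc_sym x y : cc x y = cc y x.
Proof. by rewrite /cc; case: (@split a b x) => x'; case: (@split a b y) => y' => //; first [by rewrite s1 | by rewrite s2]. Qed.

Lemma lr_ne x y : lshift b x != rshift a y.
Proof. by rewrite -val_eqE /= neq_ltn (leq_trans (ltn_ord x) (leq_addr _ _)). Qed.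

Lemma split_cases (z : 'I_(a + b)) : (exists z', z = lshift b z') \/ (exists z', z = rshift a z').
Proof.
case: (splitP z) => z' hz; [left|right]; exists z'; apply: val_inj; by rewrite /= hz.
Qed.

Lemma E_ll j x y : colG cc (wk j) (lshift b x) (lshift b y) = colG c1 j x y.
Proof. by rewrite /colG cc_ll (inj_eq wk_inj) (inj_eq (@lshift_inj _ _)). Qed.
Lemma E_rr j x y : colG cc (wk j) (rshift a x) (rshift a y) = colG c2 j x y.
Proof. by rewrite /colG cc_rr (inj_eq wk_inj) (inj_eq (@rshift_inj _ _)). Qed.
Lemma E_lr j x y : colG cc (wk j) (lshift b x) (rshift a y) = false.
Proof. by rewrite /colG cc_lr [ord_max == _]eq_sym wk_max andbF. Qed.
Lemma E_rl j x y : colG cc (wk j) (rshift a x) (lshift b y) = false.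
Proof. by rewrite /colG cc_rl [ord_max == _]eq_sym wk_max andbF. Qed.
Lemma M_ll x y : colG cc ord_max (lshift b x) (lshift b y) = false.
Proof. by rewrite /colG cc_ll wk_max andbF. Qed.
Lemma M_rr x y : colG cc ord_max (rshift a x) (rshift a y) = false.
Proof. by rewrite /colG cc_rr wk_max andbF. Qed.
Lemma M_lr x y : colG cc ord_max (lshift b x) (rshift a y).
Proof. by rewrite /colG cc_lr eqxx lr_ne. Qed.
Lemma M_rl x y : colG cc ord_max (rshift a x) (lshift b y).
Proof. by rewrite /colG cc_rl eqxx eq_sym lr_ne. Qed.

Lemma deg_l j x : deg (colG cc (wk j)) (lshift b x) = deg (colG c1 j) x.
Proof.
apply: (@deg_img _ _ _ _ (@lshift a b)); first exact: lshift_inj.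
move=> z; case: (split_cases z) => [[z' ->]|[z' ->]].
  by rewrite E_ll (mem_imset _ _ (@lshift_inj _ _)) inE.
rewrite E_lr; apply/esym/imsetP => [[y _ /eqP]].
by rewrite eq_sym (negbTE (lr_ne _ _)).
Qed.

Lemma deg_r j x : deg (colG cc (wk j)) (rshift a x) = deg (colG c2 j) x.
Proof.
apply: (@deg_img _ _ _ _ (@rshift a b)); first exact: rshift_inj.
move=> z; case: (split_cases z) => [[z' ->]|[z' ->]].
  rewrite E_rl; apply/esym/imsetP => [[y _ /eqP]].
  by rewrite (negbTE (lr_ne _ _)).
by rewrite E_rr (mem_imset _ _ (@rshift_inj _ _)) inE.
Qed.

Lemma degM_l x : deg (colG cc ord_max) (lshift b x) = b.
Proof.
transitivity #|[set: 'I_b]|; last by rewrite cardsT card_ord.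
apply: (@deg_img _ _ _ _ (@rshift a b)); first exact: rshift_inj.
move=> z; case: (split_cases z) => [[z' ->]|[z' ->]].
  rewrite M_ll; apply/esym/imsetP => [[y _ /eqP]].
  by rewrite (negbTE (lr_ne _ _)).
by rewrite M_lr (mem_imset _ _ (@rshift_inj _ _)) inE.
Qed.

Lemma degM_r x : deg (colG cc ord_max) (rshift a x) = a.
Proof.
transitivity #|[set: 'I_a]|; last by rewrite cardsT card_ord.
apply: (@deg_img _ _ _ _ (@lshift a b)); first exact: lshift_inj.
move=> z; case: (split_cases z) => [[z' ->]|[z' ->]].
  by rewrite M_rl (mem_imset _ _ (@lshift_inj _ _)) inE.
rewrite M_rr; apply/esym/imsetP => [[y _ /eqP]].
by rewrite eq_sym (negbTE (lr_ne _ _)).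
Qed.

Lemma col_cases (j : 'I_k.+1) : j = ord_max \/ exists j', j = wk j'.
Proof.
case: (ltnP j k) => h; last first.
  by left; apply: val_inj => /=; have := ltn_ord j; lia.
by right; exists (Ordinal h); apply: val_inj.
Qed.

Lemma cc_bad j : mp (colG cc j) < 3.
Proof.
apply: mp_lt3 => x y w.
case: (col_cases j) => [->|[j' ->]].
  case: (split_cases x) => [[x' ->]|[x' ->]]; case: (split_cases y) => [[y' ->]|[y' ->]];
  rewrite ?M_ll ?M_rr //;
  case: (split_cases w) => [[w' ->]|[w' ->]]; rewrite ?M_ll ?M_rr // => _ _ _;
  rewrite ?degM_l ?degM_r; apply/negP => /andP [h1 h2]; move: nab; rewrite eqn_leq h1 h2 //.
case: (split_cases x) => [[x' ->]|[x' ->]]; case: (split_cases y) => [[y' ->]|[y' ->]];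
rewrite ?E_lr ?E_rl //;
case: (split_cases w) => [[w' ->]|[w' ->]]; rewrite ?E_lr ?E_rl //.
  rewrite !E_ll !deg_l (inj_eq (@lshift_inj _ _)) => exy eyw nxw.
  by apply: mp_nomono => //; [case/andP: exy|case/andP: eyw].
rewrite !E_rr !deg_r (inj_eq (@rshift_inj _ _)) => exy eyw nxw.
by apply: mp_nomono => //; [case/andP: exy|case/andP: eyw].
Qed.
End Comb.

Lemma bad_comb k a b : bad k a -> bad k b -> a != b -> bad k.+1 (a + b).
Proof.
move=> [c1 [s1 b1]] [c2 [s2 b2]] nab.
exists (cc c1 c2); split; first exact: cc_sym.
by move=> j; apply: cc_bad.
Qed.


Definition tab7 : seq (seq nat) :=
  [:: [:: 0;0;2;2;0;1;1]; [:: 0;0;2;2;1;0;0]; [:: 2;2;0;0;2;1;1]; [:: 2;2;0;0;2;1;1];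
      [:: 0;1;2;2;0;0;0]; [:: 1;0;1;1;0;0;2]; [:: 1;0;1;1;0;2;0]].
Definition tab6 : seq (seq nat) :=
  [:: [:: 0;1;1;0;1;2]; [:: 1;0;2;1;0;2]; [:: 1;2;0;2;2;0]; [:: 0;1;2;0;1;1];
      [:: 1;0;2;1;0;2]; [:: 2;2;0;1;2;0]].

Definition cn (t : seq (seq nat)) (x y : nat) : nat := nth 0 (nth [::] t x) y.
Definition ctab n (t : seq (seq nat)) (x y : 'I_n) : 'I_3 := inord (cn t x y).
Definition En t (j x y : nat) := (x != y) && (cn t x y == j).
Definition degn t n j x := count (En t j x) (iota 0 n).

Definition checkn t n :=
  all (fun x => all (fun y => (cn t x y == cn t y x) && (cn t x y < 3)) (iota 0 n)) (iota 0 n) &&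
  all (fun j => all (fun x => all (fun y => all (fun w =>
     ~~ [&& En t j x y, En t j y w, x != w &
            (degn t n j x <= degn t n j y) && (degn t n j y <= degn t n j w)])
     (iota 0 n)) (iota 0 n)) (iota 0 n)) (iota 0 3).

Lemma deg_count (T : finType) (e : rel T) x : deg e x = count (e x) (enum T).
Proof. by rewrite /deg cardsE cardE enumT /enum_mem size_filter. Qed.

Lemma check_bad n t : checkn t n -> bad 3 n.
Proof.
case/andP => /allP hs /allP hb.
have hs' : forall x y : 'I_n, (cn t x y == cn t y x) && (cn t x y < 3).
  move=> x y; have := hs x; rewrite mem_iota add0n ltn_ord => /(_ isT) /allP.
  by apply; rewrite mem_iota add0n ltn_ord.
have val_ctab : forall x y : 'I_n, nat_of_ord (ctab t x y) = cn t x y.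
  by move=> x y; rewrite /ctab inordK //; case/andP: (hs' x y).
have E_eq : forall (j : 'I_3) (x y : 'I_n), colG (ctab t) j x y = En t j x y.
  by move=> j x y; rewrite /colG /En -[ctab t x y == j]val_eqE /= (val_ctab x y).
have deg_eq : forall (j : 'I_3) (x : 'I_n), deg (colG (ctab t) j) x = degn t n j x.
  move=> j x; rewrite deg_count /degn -val_enum_ord count_map.
  by apply: eq_count => y; rewrite /= E_eq.
exists (ctab t); split.
  move=> x y; apply/eqP; rewrite -val_eqE /= !val_ctab; by case/andP: (hs' x y).
move=> j; apply: mp_lt3 => x y w exy eyw nxw.
rewrite !deg_eq; rewrite !E_eq in exy eyw.
have := hb j; rewrite mem_iota add0n ltn_ord => /(_ isT) /allP /(_ x).
rewrite mem_iota add0n ltn_ord => /(_ isT) /allP /(_ y).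
rewrite mem_iota add0n ltn_ord => /(_ isT) /allP /(_ w).
rewrite mem_iota add0n ltn_ord => /(_ isT).
by rewrite exy eyw /= (_ : (x : nat) != w).
Qed.

Lemma bad3_7 : bad 3 7.
Proof. apply: (@check_bad 7 tab7); vm_compute; reflexivity. Qed.
Lemma bad3_6 : bad 3 6.
Proof. apply: (@check_bad 6 tab6); vm_compute; reflexivity. Qed.


Lemma exists_bad_col n k (c : 'I_n -> 'I_n -> 'I_k) :
  ((forall j, mp (colG c j) < 3) -> False) -> exists j, 3 <= mp (colG c j).
Proof.
move=> H; case: (boolP [exists j, 3 <= mp (colG c j)]) => [/existsP //|hn].
exfalso; apply: H => j; rewrite ltnNge; apply/negP => h.
by move: hn; apply/negP/negPn/existsP; exists j.
Qed.

Lemma good_pow k : 2 <= k -> Mk_good k 3 (2 ^ k).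
Proof.
move=> hk n hn c cs; apply: exists_bad_col => hb.
exact: (full_contra cs hb hn hk).
Qed.

Lemma good_odd k : 4 <= k -> Mk_good k 3 (2 ^ k).-1.
Proof.
move=> hk n hn c cs; apply: exists_bad_col => hb.
have p4 := pow2_big (ltnW (ltnW hk)).
case: (eqVneq n.+1 (2 ^ k)) => e.
  have n0 : 0 < n by lia.
  exact: (odd_contra cs hb e hk (Ordinal n0)).
have hn' : 2 ^ k <= n by lia.
by apply: (full_contra cs hb hn'); lia.
Qed.

Lemma bad_lt k n M : bad k n -> Mk_good k 3 M -> n < M.
Proof.
move=> [c [cs hb]] hg; rewrite ltnNge; apply/negP => hM.
have [j hj] := hg n hM c cs.
by move: (hb j); rewrite ltnNge hj.
Qed.

Lemma min_ex (P : nat -> Prop) : forall N, P N -> exists M, P M /\ (forall M', P M' -> M <= M').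
Proof.
elim/ltn_ind => N IH PN.
case: (classic (exists M', P M' /\ M' < N)) => [[M' [PM' lt]]|H].
  exact: IH M' lt PM'.
exists N; split=> // M' PM'; rewrite leqNgt; apply/negP => lt.
by apply: H; exists M'.
Qed.

Lemma bad1 n : n <= 2 -> bad 1 n.
Proof. by apply: bad_small. Qed.

Lemma bad2 n : n <= 3 -> bad 2 n.
Proof.
move=> hn; case: (leqP n 2) => h; first by apply: bad_small.
have -> : n = 1 + 2 by lia.
by apply: bad_comb => //; apply: bad_small.
Qed.

Lemma bad3 n : n <= 7 -> bad 3 n.
Proof.
move=> hn; case: (leqP n 2) => h; first by apply: bad_small.
case: (eqVneq n 7) => [->|n7]; first exact: bad3_7.
case: (eqVneq n 6) => [->|n6]; first exact: bad3_6.
case: (eqVneq n 5) => [->|n5].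
  by rewrite (_ : 5 = 2 + 3) //; apply: bad_comb => //; apply: bad2.
have -> : n = 1 + (n - 1) by lia.
apply: bad_comb; [exact: bad2|apply: bad2; lia|lia].
Qed.

Lemma bad_fam m : forall n, n <= 3 * 2 ^ m.+1 + 1 -> bad (m + 3) n.
Proof.
elim: m => [|m IH] n hn; first by apply: bad3; rewrite expn1 in hn; lia.
rewrite addSn.
case: (leqP n (3 * 2 ^ m.+1 + 1)) => h.
  case: (eqVneq n 0) => [->|n0]; first by apply: bad_small.
  rewrite -(addn0 n); apply: bad_comb => //; [exact: IH|apply: bad_small; lia].
set N := 3 * 2 ^ m.+1 + 1.
have e : 2 ^ m.+2 = 2 * 2 ^ m.+1 by rewrite expnS.
have -> : n = N + (n - N) by lia.
apply: bad_comb; [exact: IH|apply: IH; lia|lia].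
Qed.

Theorem theorem1p3 :
  is_Mk 2 3 4 /\ is_Mk 3 3 8 /\
  (forall k, 4 <= k ->
     exists M, is_Mk k 3 M /\ 3 * 2 ^ k + 8 <= 4 * M /\ M <= 2 ^ k - 1).
Proof.
split.
  split; first exact: (good_pow (k:=2)).
  by move=> M' hg; apply: (bad_lt (@bad2 3 (leqnn 3)) hg).
split.
  split; first exact: (good_pow (k:=3)).
  by move=> M' hg; apply: (bad_lt (@bad3 7 (leqnn 7)) hg).
move=> k hk.
have [M [gM minM]] := min_ex (good_odd hk).
exists M; split; first by split.
have hle := minM _ (good_odd hk).
have hb : bad k (3 * 2 ^ (k - 2) + 1).
  have -> : k = (k - 3) + 3 by lia.
  have -> : (k - 3) + 3 - 2 = (k - 3).+1 by lia.
  by apply: bad_fam.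
have hlt := bad_lt hb gM.
have e : 2 ^ k = 4 * 2 ^ (k - 2).
  by rewrite -[4]/(2 ^ 2) -expnD; congr (2 ^ _); lia.
split; lia.
Qed.
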